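(* Let $P_p, P_e \in \mathbb{R}^{n\times n}$ be row-stochastic matrices, viewed as the transition matrices of two independent discrete-time Markov chains (a pursuer and an evader) on the node set $\{1,\dots,n\}$. The following statements are equivalent: (i) for every pair of nodes $i,j$, the meeting time $m_{i,j}$ is finite; (ii) for every pair of nodes $i,j$, there exist a node $k$ and a length $\ell\ge 1$ such that there is a walk of length $\ell$ from $i$ to $k$ for $P_p$ and a walk of length $\ell$ from $j$ to $k$ for $P_e$; (iii) for every pair of nodes $i,j$, there exists a walk of length at least $1$ for the stochastic matrix $P_e\otimes P_p$ from the Kronecker-graph node $(i,j)$ to a node $(k,k)$ for some $k\in\{1,\dots,n\}$; (iv) the row-substochastic matrix $(P_e\otimes P_p)E$ has spectral radius strictly less than $1$, where $E = I_{n^2} - \mathrm{diag}(\mathrm{vec}(I_n))$. Moreover, when these hold, the matrix $M=[m_{i,j}]$ of meeting times satisfies $$\mathrm{vec}(M) = \big(I_{n^2} - (P_e\otimes P_p)E\big)^{-1}\mathbf{1}_{n^2}.$$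
   Context: Let $X^{(p)}_t, X^{(e)}_t\in\{1,\dots,n\}$, $t=0,1,2,\dots$, be the positions of the pursuer and evader, evolving as independent Markov chains with transition matrices $P_p=[p^{(p)}_{i,j}]$ and $P_e=[p^{(e)}_{i,j}]$ (typically supported on the edges of a strongly connected digraph on $\{1,\dots,n\}$). The first meeting time from $i,j$ is $T_{i,j}=\min\{t\ge 1 : X^{(p)}_t = X^{(e)}_t\}$ given $X^{(p)}_0=i$, $X^{(e)}_0=j$ (with $T_{i,j}=\infty$ if they never meet; if $i=j$ this is the first time $t\ge1$ they meet again), and the meeting time is $m_{i,j}=\mathbb{E}[T_{i,j}]$. A walk of length $\ell$ from $i_1$ to $i_{\ell+1}$ for a matrix $P=[p_{a,b}]$ is a sequence of nodes $i_1,\dots,i_{\ell+1}$ with $p_{i_k,i_{k+1}}>0$ for $1\le k\le \ell$. $\otimes$ is the Kronecker product; the Kronecker graph has node set $\{1,\dots,n\}^2$, with node $(i,j)$ (pursuer at $i$, evader at $j$) corresponding to index $(j-1)n+i$ of $P_e\otimes P_p$. $\mathrm{vec}$ stacks the columns of a matrix into a vector (so $m_{i,j}$ is the $((j-1)n+i)$-th entry of $\mathrm{vec}(M)$), $\mathrm{diag}(v)$ is the diagonal matrix with diagonal $v$, and $\mathbf{1}_{N}$ is the all-ones vector in $\mathbb{R}^N$. *)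

(* Defs.v *)
(* Nodes are 0-indexed: {0,...,n-1}.
   Matrices are functions nat -> nat -> R, only entries with indices < size
   are relevant. *)
From Stdlib Require Import Reals Arith.
Open Scope R_scope.

Fixpoint rsum (m : nat) (f : nat -> R) : R :=
  match m with
  | O => 0
  | S m' => rsum m' f + f m'
  end.

Definition row_stochastic (n : nat) (P : nat -> nat -> R) : Prop :=
  (forall i j, (i < n)%nat -> (j < n)%nat -> 0 <= P i j) /\
  (forall i, (i < n)%nat -> rsum n (fun j => P i j) = 1).

Definition walk (N : nat) (P : nat -> nat -> R) (l a b : nat) : Prop :=
  exists s : nat -> nat,
    s O = a /\ s l = b /\
    (forall t, (t <= l)%nat -> (s t < N)%nat) /\
    (forall t, (t < l)%nat -> 0 < P (s t) (s (S t))).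

(* meet_prob n Pp Pe t i j = Prob(T_{i,j} = t), the law of the first meeting
   time (t >= 1) of the independent chains started at X^p_0 = i, X^e_0 = j,
   obtained from the Markov property by conditioning on the first step
   (X^p_1, X^e_1) = (k, l):  T = 1 if k = l, and T = 1 + T_{k,l} otherwise. *)
Fixpoint meet_prob (n : nat) (Pp Pe : nat -> nat -> R) (t i j : nat) : R :=
  match t with
  | O => 0
  | S t' =>
      rsum n (fun k => rsum n (fun l =>
        Pp i k * Pe j l *
        (if Nat.eqb k l then (if Nat.eqb t' O then 1 else 0)
         else meet_prob n Pp Pe t' k l)))
  end.

(* m_{i,j} = E[T_{i,j}] is finite: T_{i,j} < oo almost surely and
   sum_t t Prob(T_{i,j} = t) converges *)
Definition meeting_time_finite (n : nat) (Pp Pe : nat -> nat -> R) (i j : nat) : Prop :=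
  infinite_sum (fun t => meet_prob n Pp Pe t i j) 1 /\
  exists m, infinite_sum (fun t => INR t * meet_prob n Pp Pe t i j) m.

Definition meeting_time_is (n : nat) (Pp Pe : nat -> nat -> R) (i j : nat) (m : R) : Prop :=
  infinite_sum (fun t => meet_prob n Pp Pe t i j) 1 /\
  infinite_sum (fun t => INR t * meet_prob n Pp Pe t i j) m.

(* For A = Pe, B = Pp, index j*n+i is the Kronecker-graph node (i,j)
   (pursuer at i, evader at j), i.e. (j-1)n+i in 1-indexed form. *)
Definition kron (n : nat) (A B : nat -> nat -> R) (r c : nat) : R :=
  A (r / n)%nat (c / n)%nat * B (r mod n)%nat (c mod n)%nat.

(* E = I_{n^2} - diag(vec(I_n)) : diagonal, entry at index j*n+i is
   1 - [i = j] *)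
Definition Emat (n : nat) (r c : nat) : R :=
  if Nat.eqb r c then (1 - (if Nat.eqb (r mod n) (r / n) then 1 else 0)) else 0.

Definition mxmul (N : nat) (A B : nat -> nat -> R) (r c : nat) : R :=
  rsum N (fun k => A r k * B k c).

Definition idmx (r c : nat) : R := if Nat.eqb r c then 1 else 0.

Definition mxsub (A B : nat -> nat -> R) (r c : nat) : R := A r c - B r c.

(* lambda = a + i b is a (complex) eigenvalue of the real N x N matrix A:
   there is a nonzero complex vector x + i y with A (x + i y) = lambda (x + i y) *)
Definition is_eigenvalue (N : nat) (A : nat -> nat -> R) (a b : R) : Prop :=
  exists x y : nat -> R,
    (exists r, (r < N)%nat /\ (x r <> 0 \/ y r <> 0)) /\
    (forall r, (r < N)%nat ->
       rsum N (fun c => A r c * x c) = a * x r - b * y r /\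
       rsum N (fun c => A r c * y c) = b * x r + a * y r).

(* spectral radius rho(A) = max |lambda| over the (finite) spectrum;
   rho(A) < 1  iff  every eigenvalue has modulus < 1 *)
Definition spectral_radius_lt_1 (N : nat) (A : nat -> nat -> R) : Prop :=
  forall a b, is_eigenvalue N A a b -> sqrt (a * a + b * b) < 1.

Definition is_inverse (N : nat) (B A : nat -> nat -> R) : Prop :=
  forall r c, (r < N)%nat -> (c < N)%nat ->
    mxmul N B A r c = idmx r c /\ mxmul N A B r c = idmx r c.

(* Main.v *)
Require Import Defs.
From Stdlib Require Import Reals Arith Lia Lra ClassicalEpsilon.
Open Scope R_scope.

Lemma rsum_ext m f g : (forall k, (k < m)%nat -> f k = g k) -> rsum m f = rsum m g.
Proof. induction m; simpl; intros H; auto. rewrite IHm by (intros; apply H; lia). rewrite H by lia. auto. Qed.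

Lemma rsum_plus m f g : rsum m (fun k => f k + g k) = rsum m f + rsum m g.
Proof. induction m; simpl; [lra|rewrite IHm; lra]. Qed.

Lemma rsum_minus m f g : rsum m (fun k => f k - g k) = rsum m f - rsum m g.
Proof. induction m; simpl; [lra|rewrite IHm; lra]. Qed.

Lemma rsum_scal m c f : rsum m (fun k => c * f k) = c * rsum m f.
Proof. induction m; simpl; [lra|rewrite IHm; lra]. Qed.

Lemma rsum_scalr m c f : rsum m (fun k => f k * c) = rsum m f * c.
Proof. induction m; simpl; [lra|rewrite IHm; lra]. Qed.

Lemma rsum_zero m : rsum m (fun _ => 0) = 0.
Proof. induction m; simpl; [lra|rewrite IHm; lra]. Qed.

Lemma rsum_const m c : rsum m (fun _ => c) = INR m * c.
Proof. induction m; simpl rsum; [simpl; lra|rewrite IHm; rewrite S_INR; lra]. Qed.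

Lemma rsum_le m f g : (forall k, (k < m)%nat -> f k <= g k) -> rsum m f <= rsum m g.
Proof. induction m; simpl; intros H; [lra|]. assert (f m <= g m) by (apply H; lia).
 assert (rsum m f <= rsum m g) by (apply IHm; intros; apply H; lia). lra. Qed.

Lemma rsum_nonneg m f : (forall k, (k < m)%nat -> 0 <= f k) -> 0 <= rsum m f.
Proof. intros H. rewrite <- (rsum_zero m). apply rsum_le. auto. Qed.

Lemma rsum_swap m p (f : nat -> nat -> R) :
  rsum m (fun a => rsum p (fun b => f a b)) = rsum p (fun b => rsum m (fun a => f a b)).
Proof. induction m; simpl. rewrite rsum_zero; auto. rewrite IHm, <- rsum_plus. auto. Qed.

Lemma rsum_ge_term m f c : (forall k, (k < m)%nat -> 0 <= f k) -> (c < m)%nat -> f c <= rsum m f.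
Proof. induction m; intros H Hc; [lia|simpl].
 destruct (Nat.eq_dec c m) as [->|Hne].
 - assert (0 <= rsum m f) by (apply rsum_nonneg; intros; apply H; lia). lra.
 - assert (f c <= rsum m f) by (apply IHm; [intros; apply H; lia|lia]).
   assert (0 <= f m) by (apply H; lia). lra. Qed.

Lemma rsum_nonzero m f : rsum m f <> 0 -> exists c, (c < m)%nat /\ f c <> 0.
Proof. induction m; simpl; intros H; [lra|].
 destruct (Req_dec (f m) 0) as [E|E].
 - destruct IHm as [c [Hc Hf]]; [lra|]. exists c; split; auto; lia.
 - exists m; split; auto. Qed.

Lemma rsum_add a b f : rsum (a + b) f = rsum a f + rsum b (fun s => f (a + s)%nat).
Proof. induction b; simpl. rewrite Nat.add_0_r; lra. rewrite Nat.add_succ_r; simpl. rewrite IHb; lra. Qed.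

Lemma rsum_mul a b f : rsum (a * b) f = rsum a (fun x => rsum b (fun y => f (x * b + y)%nat)).
Proof. induction a; simpl; auto. replace (b + a * b)%nat with (a * b + b)%nat by lia.
 rewrite rsum_add, IHa. auto. Qed.

Lemma rsum_delta m c g : (c < m)%nat -> rsum m (fun k => if Nat.eqb k c then g k else 0) = g c.
Proof. induction m; intros Hc; [lia|simpl].
 destruct (Nat.eq_dec c m) as [->|Hne].
 - rewrite Nat.eqb_refl. rewrite (rsum_ext _ _ (fun _ => 0)). rewrite rsum_zero; lra.
   intros k Hk. destruct (Nat.eqb_spec k m); [lia|auto].
 - rewrite IHm by lia. destruct (Nat.eqb_spec m c); [lia|lra]. Qed.

Lemma rsum_ge_const m f c : (forall k, (k < m)%nat -> c <= f k) -> INR m * c <= rsum m f.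
Proof. intros H. rewrite <- rsum_const. apply rsum_le. auto. Qed.

Lemma wcs m w x : (forall k, (k < m)%nat -> 0 <= w k) -> rsum m w <= 1 ->
  (rsum m (fun k => w k * x k)) ^ 2 <= rsum m (fun k => w k * (x k * x k)).
Proof. intros Hw H1. set (s := rsum m (fun k => w k * x k)).
 assert (0 <= rsum m (fun k => w k * ((x k - s) * (x k - s)))).
 { apply rsum_nonneg; intros k Hk. specialize (Hw k Hk). apply Rmult_le_pos; auto. pose proof (Rle_0_sqr (x k - s)) as Q; unfold Rsqr in Q; lra. }
 replace (rsum m (fun k => w k * ((x k - s) * (x k - s)))) with
   (rsum m (fun k => w k * (x k * x k)) - 2 * s * rsum m (fun k => w k * x k) + s * s * rsum m w) in H.
 2:{ rewrite <- !rsum_scal, <- rsum_minus, <- rsum_plus. apply rsum_ext; intros; ring. }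
 fold s in H. assert (0 <= s * s) by (pose proof (Rle_0_sqr s) as Q; unfold Rsqr in Q; lra).
 assert (0 <= s * s * (1 - rsum m w)) by (apply Rmult_le_pos; lra). simpl. nra. Qed.

Lemma cv_const c : Un_cv (fun _ => c) c.
Proof. intros e He. exists 0%nat. intros. unfold Rdist. rewrite Rminus_diag, Rabs_R0. lra. Qed.

Lemma cv_rsum m (u : nat -> nat -> R) l :
  (forall k, (k < m)%nat -> Un_cv (u k) (l k)) ->
  Un_cv (fun T => rsum m (fun k => u k T)) (rsum m l).
Proof. induction m; intros H; simpl.
 - apply cv_const.
 - apply CV_plus. apply IHm; intros; apply H; lia. apply H; lia. Qed.

Lemma cv_shift u l : Un_cv u l -> Un_cv (fun T => u (S T)) l.
Proof. intros H e He. destruct (H e He) as [N0 HN]. exists N0. intros. apply HN. lia. Qed.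

Lemma cv_ext u v l : (forall T, u T = v T) -> Un_cv u l -> Un_cv v l.
Proof. intros E H e He. destruct (H e He) as [N0 HN]. exists N0. intros. rewrite <- E. auto. Qed.

Lemma cv_scal c u l : Un_cv u l -> Un_cv (fun T => c * u T) (c * l).
Proof. intros H. apply CV_mult; auto. apply cv_const. Qed.

Definition sums (f : nat -> R) (l : R) := Un_cv (fun T => rsum T f) l.

Lemma sums_unique f l1 l2 : sums f l1 -> sums f l2 -> l1 = l2.
Proof. apply UL_sequence. Qed.

Lemma sum_f_R0_rsum f n : sum_f_R0 f n = rsum (S n) f.
Proof. induction n as [|n IH]; simpl; [lra|]. rewrite IH. simpl. auto. Qed.

Lemma sums_infinite f l : sums f l -> infinite_sum f l.
Proof. intros H. unfold infinite_sum. apply (cv_ext (fun T => rsum (S T) f)).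
 intros; rewrite sum_f_R0_rsum; auto. apply (cv_shift (fun T => rsum T f)). auto. Qed.

Lemma rsum_S_l T f : rsum (S T) f = f 0%nat + rsum T (fun t => f (S t)).
Proof. induction T; simpl; [lra|]. simpl in IHT. rewrite IHT. lra. Qed.

Lemma sums_shift f l : sums f l -> sums (fun t => f (S t)) (l - f 0%nat).
Proof. intros H. unfold sums.
 apply (cv_ext (fun T => rsum (S T) f - f 0%nat)).
 intros T. rewrite rsum_S_l. lra.
 apply CV_minus. apply (cv_shift (fun T => rsum T f)); auto. apply cv_const. Qed.

Lemma sums_lin m (w : nat -> R) (f : nat -> nat -> R) l :
  (forall k, (k < m)%nat -> sums (f k) (l k)) ->
  sums (fun t => rsum m (fun k => w k * f k t)) (rsum m (fun k => w k * l k)).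
Proof. intros H. unfold sums.
 apply (cv_ext (fun T => rsum m (fun k => w k * rsum T (f k)))).
 - intros T. rewrite rsum_swap. apply rsum_ext. intros k _. rewrite rsum_scal. auto.
 - apply cv_rsum. intros k Hk. apply cv_scal. apply H; auto. Qed.

Lemma sums_bounded f B : (forall t, 0 <= f t) -> (forall T, rsum T f <= B) -> exists l, sums f l.
Proof. intros H0 HB. destruct (growing_cv (fun T => rsum T f)) as [l Hl].
 - intros T. simpl. specialize (H0 T). lra.
 - exists B. intros x [i ->]. auto.
 - exists l. exact Hl. Qed.

Lemma rsum_mono_len f a b : (forall t, 0 <= f t) -> (a <= b)%nat -> rsum a f <= rsum b f.
Proof. intros H Hab. replace b with (a + (b - a))%nat by lia. rewrite rsum_add.
 assert (0 <= rsum (b - a) (fun s => f (a + s)%nat)) by (apply rsum_nonneg; auto). lra. Qed.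

Lemma geom_sum q K : rsum K (fun x => q ^ x) * (1 - q) = 1 - q ^ K.
Proof. induction K; simpl; [lra|]. rewrite Rmult_plus_distr_r, IHK. ring. Qed.

Lemma max_exists N (f : nat -> R) : (0 < N)%nat -> exists r, (r < N)%nat /\ forall k, (k < N)%nat -> f k <= f r.
Proof. induction N; intros H; [lia|]. destruct (Nat.eq_dec N 0) as [->|HN].
 - exists 0%nat; split; auto. intros k Hk. replace k with 0%nat by lia. lra.
 - destruct IHN as [r [Hr Hm]]; [lia|]. destruct (Rle_dec (f r) (f N)).
   + exists N; split; [lia|]. intros k Hk. destruct (Nat.eq_dec k N); [subst; lra|].
     assert (f k <= f r) by (apply Hm; lia). lra.
   + exists r; split; [lia|]. intros k Hk. destruct (Nat.eq_dec k N); [subst; lra|]. apply Hm; lia. Qed.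

Lemma rsum_strict m f g c : (forall k, (k < m)%nat -> f k <= g k) -> (c < m)%nat -> f c < g c ->
  rsum m f < rsum m g.
Proof. intros H Hc Hs. assert (0 < rsum m (fun k => g k - f k)).
 { apply Rlt_le_trans with (g c - f c). lra. apply (rsum_ge_term m (fun k => g k - f k)); auto. intros k Hk. specialize (H k Hk). lra. }
 rewrite rsum_minus in H0. lra. Qed.

Section Generic.
Variable N : nat.
Variable A : nat -> nat -> R.
Hypothesis hA0 : forall r c, (r < N)%nat -> (c < N)%nat -> 0 <= A r c.
Hypothesis hA1 : forall r, (r < N)%nat -> rsum N (fun c => A r c) <= 1.

Definition Av (v : nat -> R) (r : nat) : R := rsum N (fun c => A r c * v c).
Fixpoint Vit (t : nat) (v : nat -> R) : nat -> R :=
  match t with O => v | S t' => Av (Vit t' v) end.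
Definition G t := Vit t (fun _ => 1).

Lemma Av_ext u v r : (forall c, (c < N)%nat -> u c = v c) -> Av u r = Av v r.
Proof. intros H. unfold Av. apply rsum_ext. intros c Hc. rewrite H; auto. Qed.

Lemma Av_mono u v r : (r < N)%nat -> (forall c, (c < N)%nat -> u c <= v c) -> Av u r <= Av v r.
Proof. intros Hr H. unfold Av. apply rsum_le. intros c Hc. apply Rmult_le_compat_l; auto. Qed.

Lemma Vit_ext t u v r : (r < N)%nat -> (forall c, (c < N)%nat -> u c = v c) -> Vit t u r = Vit t v r.
Proof. revert r. induction t; intros r Hr H; simpl; auto.
 apply Av_ext. intros; apply IHt; auto. Qed.

Lemma Vit_mono t u v r : (r < N)%nat -> (forall c, (c < N)%nat -> u c <= v c) -> Vit t u r <= Vit t v r.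
Proof. revert r. induction t; intros r Hr H; simpl; auto.
 apply Av_mono; auto. Qed.

Lemma Vit_scal t a u r : Vit t (fun c => a * u c) r = a * Vit t u r.
Proof. revert r. induction t; intros r; simpl; auto.
 rewrite (Av_ext _ (fun c => a * Vit t u c)) by (intros; auto).
 unfold Av. rewrite <- rsum_scal. apply rsum_ext; intros; ring. Qed.

Lemma Vit_rsum t m (f : nat -> nat -> R) r :
  Vit t (fun k => rsum m (fun c => f c k)) r = rsum m (fun c => Vit t (f c) r).
Proof. revert r. induction t; intros r; simpl; auto.
 rewrite (Av_ext _ (fun k => rsum m (fun c => Vit t (f c) k))) by (intros; auto).
 unfold Av. rewrite <- rsum_swap. apply rsum_ext. intros c _. rewrite <- rsum_scal. auto. Qed.

Lemma Vit_add t s v r : Vit (t + s) v r = Vit t (Vit s v) r.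
Proof. revert r. induction t; intros r; simpl; auto. apply Av_ext. intros; auto. Qed.

Lemma Vit_nonneg t v r : (r < N)%nat -> (forall c, (c < N)%nat -> 0 <= v c) -> 0 <= Vit t v r.
Proof. revert r. induction t; intros r Hr H; simpl; auto.
 unfold Av. apply rsum_nonneg. intros c Hc. apply Rmult_le_pos; auto. Qed.

Lemma G_nonneg t r : (r < N)%nat -> 0 <= G t r.
Proof. intros. apply Vit_nonneg; auto. intros; lra. Qed.

Lemma Av_one r : (r < N)%nat -> Av (fun _ => 1) r <= 1.
Proof. intros Hr. unfold Av. rewrite (rsum_ext N (fun c => A r c * 1) (fun c => A r c)) by (intros; ring). auto. Qed.

Lemma G_dec t r : (r < N)%nat -> G (S t) r <= G t r.
Proof. revert r. induction t; intros r Hr.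
 - unfold G; simpl. apply Av_one; auto.
 - unfold G in *; simpl in *. apply Av_mono; auto. Qed.

Lemma G_anti t t' r : (r < N)%nat -> (t <= t')%nat -> G t' r <= G t r.
Proof. intros Hr H. induction H; [lra|]. pose proof (G_dec m r Hr). lra. Qed.

Lemma G_le1 t r : (r < N)%nat -> G t r <= 1.
Proof. intros Hr. apply (G_anti 0 t r Hr). lia. Qed.

Section Decay.
Hypothesis HD : forall r, (r < N)%nat -> exists t, G t r < 1.

Lemma decay_uniform : exists L q, 0 <= q < 1 /\ forall r, (r < N)%nat -> G L r <= q.
Proof.
 assert (forall m, (m <= N)%nat -> exists L q, 0 <= q < 1 /\ forall r, (r < m)%nat -> G L r <= q).
 { induction m; intros Hm.
   - exists 0%nat, 0. split; [lra|]. intros; lia.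
   - destruct IHm as [L1 [q1 [Hq1 H1]]]; [lia|].
     destruct (HD m) as [tm Htm]; [lia|].
     exists (Nat.max L1 tm), (Rmax q1 (G tm m)). split.
     + split. apply Rle_trans with q1; [lra|apply Rmax_l].
       apply Rmax_lub_lt; try lra.
     + intros r Hr. destruct (Nat.eq_dec r m) as [->|Hne].
       * apply Rle_trans with (G tm m). apply G_anti; lia. apply Rmax_r.
       * apply Rle_trans with (G L1 r). apply G_anti; lia.
         apply Rle_trans with q1. apply H1; lia. apply Rmax_l. }
 destruct (H N (le_n N)) as [L [q [Hq HL]]]. exists L, q. auto. Qed.

Variable L : nat.
Variable q : R.
Hypothesis Hq : 0 <= q < 1.
Hypothesis HL : forall r, (r < N)%nat -> G L r <= q.

Lemma G_step t r : (r < N)%nat -> G (t + L) r <= q * G t r.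
Proof. intros Hr. unfold G at 1. rewrite Vit_add. fold (G L).
 apply Rle_trans with (Vit t (fun c => q * 1) r).
 - apply Vit_mono; auto. intros c Hc. specialize (HL c Hc). lra.
 - rewrite (Vit_scal t q (fun _ => 1)). unfold G. lra. Qed.

Lemma G_pow k r : (r < N)%nat -> G (k * L) r <= q ^ k.
Proof. intros Hr. induction k; simpl.
 - apply G_le1; auto.
 - replace (L + k * L)%nat with (k * L + L)%nat by lia.
   pose proof (G_step (k * L) r Hr). pose proof (G_nonneg (k*L) r Hr).
   apply Rle_trans with (q * G (k * L) r); auto. apply Rmult_le_compat_l; lra. Qed.

Lemma L_pos : (0 < N)%nat -> (0 < L)%nat.
Proof. intros HN. destruct (Nat.eq_dec L 0) as [E|E]; [|lia]. exfalso. pose proof (HL 0%nat HN) as H0.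
 rewrite E in H0. unfold G in H0. simpl in H0. lra. Qed.

Lemma G_cv0 r : (r < N)%nat -> Un_cv (fun t => G t r) 0.
Proof. intros Hr e He. assert (HN : (0 < N)%nat) by lia. pose proof (L_pos HN) as HLp.
 destruct (pow_lt_1_zero q ltac:(rewrite Rabs_right; lra) e He) as [K HK].
 exists (K * L)%nat. intros T HT. unfold Rdist. rewrite Rminus_0_r.
 rewrite Rabs_right by (apply Rle_ge, G_nonneg; auto).
 apply Rle_lt_trans with (G (K * L) r). apply G_anti; auto.
 apply Rle_lt_trans with (q ^ K). apply G_pow; auto.
 specialize (HK K (le_n K)). rewrite Rabs_right in HK; auto. apply Rle_ge, pow_le; lra. Qed.

Lemma G_sum_bound r T : (r < N)%nat -> rsum T (fun t => G t r) <= INR L / (1 - q).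
Proof. intros Hr. assert (HN : (0 < N)%nat) by lia. pose proof (L_pos HN) as HLp.
 apply Rle_trans with (rsum (T * L) (fun t => G t r)).
 { apply rsum_mono_len. intros; apply G_nonneg; auto. nia. }
 rewrite rsum_mul.
 apply Rle_trans with (rsum T (fun x => INR L * q ^ x)).
 { apply rsum_le. intros x Hx. apply Rle_trans with (rsum L (fun _ => q ^ x)).
   - apply rsum_le. intros y Hy. apply Rle_trans with (G (x * L) r). apply G_anti; auto; lia.
     apply G_pow; auto.
   - rewrite rsum_const. lra. }
 rewrite rsum_scal. unfold Rdiv. apply Rmult_le_compat_l. apply pos_INR.
 pose proof (geom_sum q T). assert (0 <= q ^ T) by (apply pow_le; lra).
 apply Rmult_le_reg_r with (1 - q). lra. rewrite Rinv_l by lra. change (rsum T (pow q)) with (rsum T (fun x => q ^ x)). lra. Qed.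

Lemma G_sums r : (r < N)%nat -> exists S, sums (fun t => G t r) S.
Proof. intros Hr. apply (sums_bounded _ (INR L / (1 - q))). intros; apply G_nonneg; auto.
 intros; apply G_sum_bound; auto. Qed.

Lemma TG_cv0 r S : (r < N)%nat -> sums (fun t => G t r) S -> Un_cv (fun T => INR T * G T r) 0.
Proof. intros Hr HS e He. destruct (HS (e / 4)) as [N0 HN0]. lra.
 exists (2 * N0)%nat. intros T HT. set (U := (T / 2)%nat).
 assert (HU : (N0 <= U)%nat) by (unfold U; apply Nat.div_le_lower_bound; lia).
 assert (HUT : (2 * U <= T)%nat) by (unfold U; apply Nat.Div0.mul_div_le; lia).
 assert (HUT' : (T < 2 * U + 2)%nat) by (unfold U; pose proof (Nat.div_mod T 2); pose proof (Nat.mod_upper_bound T 2); lia).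
 pose proof (HN0 T ltac:(lia)) as A1. pose proof (HN0 U HU) as A2. unfold Rdist in A1, A2.
 assert (Hb : INR (T - U) * G T r <= rsum T (fun t => G t r) - rsum U (fun t => G t r)).
 { assert (E : rsum T (fun t => G t r) = rsum (U + (T - U)) (fun t => G t r)) by (f_equal; lia).
   rewrite E, rsum_add.
   assert (INR (T - U) * G T r <= rsum (T - U) (fun s => G (U + s)%nat r)).
   { apply rsum_ge_const. intros k Hk. apply G_anti; auto; lia. }
   lra. }
 assert (HT2 : INR T <= 2 * INR (T - U)).
 { replace (2 * INR (T - U)) with (INR (2 * (T - U))) by (rewrite mult_INR; simpl; ring). apply le_INR. lia. }
 pose proof (G_nonneg T r Hr).
 unfold Rdist. rewrite Rminus_0_r. rewrite Rabs_right.
 2:{ apply Rle_ge, Rmult_le_pos; auto. apply pos_INR. }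
 apply Rle_lt_trans with (2 * (INR (T - U) * G T r)).
 { rewrite <- Rmult_assoc. apply Rmult_le_compat_r; auto. }
 apply Rabs_def2 in A1. apply Rabs_def2 in A2. lra. Qed.


Definition P t r c := Vit t (fun k => idmx k c) r.
Definition Binv r c := epsilon (inhabits 0) (fun l => sums (fun t => P t r c) l).

Lemma idmx_bounds k c : 0 <= idmx k c <= 1.
Proof. unfold idmx. destruct (Nat.eqb k c); lra. Qed.

Lemma P_bounds t r c : (r < N)%nat -> 0 <= P t r c <= G t r.
Proof. intros Hr. unfold P, G. split.
 - apply Vit_nonneg; auto. intros; apply idmx_bounds.
 - apply Vit_mono; auto. intros; apply idmx_bounds. Qed.

Lemma P_sums r c : (r < N)%nat -> sums (fun t => P t r c) (Binv r c).
Proof. intros Hr. unfold Binv. apply epsilon_spec.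
 apply (sums_bounded _ (INR L / (1 - q))).
 - intros; apply P_bounds; auto.
 - intros T. apply Rle_trans with (rsum T (fun t => G t r)).
   apply rsum_le. intros; apply P_bounds; auto. apply G_sum_bound; auto. Qed.

Lemma delta_l m r f : (r < m)%nat -> rsum m (fun k => idmx r k * f k) = f r.
Proof. intros Hr. rewrite <- (rsum_delta m r f Hr). apply rsum_ext. intros k _.
 unfold idmx. rewrite Nat.eqb_sym. destruct (Nat.eqb k r); ring. Qed.

Lemma delta_r m c f : (c < m)%nat -> rsum m (fun k => f k * idmx k c) = f c.
Proof. intros Hc. rewrite <- (rsum_delta m c f Hc). apply rsum_ext. intros k _.
 unfold idmx. destruct (Nat.eqb k c); ring. Qed.

Lemma P_right t r c : (r < N)%nat -> (c < N)%nat ->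
  rsum N (fun k => P t r k * A k c) = P (S t) r c.
Proof. revert r. induction t; intros r Hr Hc.
 - unfold P; simpl. rewrite delta_l by auto. unfold Av. rewrite delta_r by auto. auto.
 - change (P (S (S t)) r c) with (rsum N (fun m => A r m * P (S t) m c)).
   change (fun k => P (S t) r k * A k c) with (fun k => rsum N (fun m => A r m * P t m k) * A k c).
   rewrite (rsum_ext N (fun k => rsum N (fun m => A r m * P t m k) * A k c)
      (fun k => rsum N (fun m => A r m * (P t m k * A k c)))).
   2:{ intros k _. rewrite <- rsum_scalr. apply rsum_ext; intros; ring. }
   rewrite rsum_swap. apply rsum_ext. intros m Hm. rewrite rsum_scal. rewrite IHt; auto. Qed.

Lemma Binv_inverse : is_inverse N Binv (mxsub idmx A).
Proof. intros r c Hr Hc. unfold mxmul, mxsub. split.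
 - rewrite (rsum_ext N _ (fun k => Binv r k * idmx k c - A k c * Binv r k)) by (intros; ring).
   rewrite rsum_minus, delta_r by auto.
   assert (H1 : sums (fun t => rsum N (fun k => A k c * P t r k)) (rsum N (fun k => A k c * Binv r k))).
   { apply sums_lin. intros; apply P_sums; auto. }
   assert (H2 : sums (fun t => rsum N (fun k => A k c * P t r k)) (Binv r c - P 0 r c)).
   { apply (cv_ext (fun T => rsum T (fun t => P (S t) r c))).
     - intros T. apply rsum_ext. intros t _. rewrite <- P_right by auto. apply rsum_ext; intros; ring.
     - exact (sums_shift (fun t => P t r c) _ (P_sums r c Hr)). }
   rewrite (sums_unique _ _ _ H1 H2). unfold P; simpl. ring.
 - rewrite (rsum_ext N _ (fun k => idmx r k * Binv k c - A r k * Binv k c)) by (intros; ring).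
   rewrite rsum_minus, delta_l by auto.
   assert (H1 : sums (fun t => rsum N (fun k => A r k * P t k c)) (rsum N (fun k => A r k * Binv k c))).
   { apply sums_lin. intros; apply P_sums; auto. }
   assert (H2 : sums (fun t => rsum N (fun k => A r k * P t k c)) (Binv r c - P 0 r c)).
   { apply (cv_ext (fun T => rsum T (fun t => P (S t) r c))).
     - intros T. apply rsum_ext. intros t _. reflexivity.
     - exact (sums_shift (fun t => P t r c) _ (P_sums r c Hr)). }
   rewrite (sums_unique _ _ _ H1 H2). unfold P; simpl. ring.
Qed.

Lemma Binv_rowsum r : (r < N)%nat -> sums (fun t => G t r) (rsum N (fun c => Binv r c)).
Proof. intros Hr.
 assert (H1 : sums (fun t => rsum N (fun c => 1 * P t r c)) (rsum N (fun c => 1 * Binv r c))).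
 { apply sums_lin. intros; apply P_sums; auto. }
 rewrite (rsum_ext N _ (fun c => 1 * Binv r c)) by (intros; ring).
 apply (cv_ext (fun T => rsum T (fun t => rsum N (fun c => 1 * P t r c)))); auto.
 intros T. apply rsum_ext. intros t _. unfold P, G.
 rewrite (rsum_ext N _ (fun c => Vit t (fun k => idmx k c) r)) by (intros; ring).
 rewrite <- Vit_rsum. apply Vit_ext; auto. intros k Hk.
 transitivity (rsum N (fun c => idmx k c * (fun _ => 1) c)). apply rsum_ext; intros; simpl; ring.
 rewrite delta_l; auto. Qed.

Lemma Av_sq_bound x r : (r < N)%nat -> (Av x r) ^ 2 <= Av (fun c => x c * x c) r.
Proof. intros Hr. unfold Av. apply wcs; auto. Qed.

Lemma spectral_lt1 : spectral_radius_lt_1 N A.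
Proof. intros a b [x [y [[r0 [Hr0 Hnz]] Hev]]].
 destruct (Rlt_dec (a * a + b * b) 1) as [Hl|Hl].
 { rewrite <- sqrt_1. apply sqrt_lt_1_alt. split; [nra|lra]. }
 exfalso. set (m := fun c => x c * x c + y c * y c).
 assert (Hm0 : forall c, 0 <= m c) by (intros; unfold m; nra).
 assert (Hm1 : forall r, (r < N)%nat -> m r <= Av m r).
 { intros r Hr. destruct (Hev r Hr) as [E1 E2].
   pose proof (Av_sq_bound x r Hr) as B1. pose proof (Av_sq_bound y r Hr) as B2.
   unfold Av in B1, B2. rewrite E1 in B1. rewrite E2 in B2.
   assert (Av m r = Av (fun c => x c * x c) r + Av (fun c => y c * y c) r).
   { unfold Av, m. rewrite <- rsum_plus. apply rsum_ext; intros; ring. }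
   rewrite H. unfold Av. 
   assert ((a * a + b * b) * m r <= rsum N (fun c => A r c * (x c * x c)) + rsum N (fun c => A r c * (y c * y c))).
   { unfold m. nra. }
   assert (m r <= (a * a + b * b) * m r). { pose proof (Hm0 r). nra. }
   lra. }
 assert (Hit : forall t r, (r < N)%nat -> m r <= Vit t m r).
 { induction t; intros r Hr; simpl; [lra|]. apply Rle_trans with (Av m r); auto.
   apply Av_mono; auto. }
 destruct (max_exists N m) as [rs [Hrs Hmax]]; [lia|].
 set (M := m rs).
 assert (HM : 0 < M).
 { apply Rlt_le_trans with (m r0); [|apply Hmax; auto]. unfold m.
   destruct Hnz as [H|H]; [assert (0 < x r0 * x r0) by (apply Rsqr_pos_lt in H; unfold Rsqr in H; lra)
   |assert (0 < y r0 * y r0) by (apply Rsqr_pos_lt in H; unfold Rsqr in H; lra)];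
   pose proof (Rle_0_sqr (x r0)); pose proof (Rle_0_sqr (y r0)); unfold Rsqr in *; lra. }
 assert (M <= Vit L m rs) by (apply Hit; auto).
 assert (Vit L m rs <= M * G L rs).
 { apply Rle_trans with (Vit L (fun c => M * 1) rs).
   - apply Vit_mono; auto. intros c Hc. rewrite Rmult_1_r. apply Hmax; auto.
   - rewrite Vit_scal. unfold G. lra. }
 pose proof (HL rs Hrs). assert (M * G L rs <= M * q) by (apply Rmult_le_compat_l; lra).
 nra. Qed.

End Decay.

Definition hlim r := epsilon (inhabits 0) (fun l => Un_cv (fun t => G t r) l).

Lemma hlim_cv r : (r < N)%nat -> Un_cv (fun t => G t r) (hlim r).
Proof. intros Hr. unfold hlim. apply epsilon_spec.
 destruct (decreasing_cv (fun t => G t r)) as [l Hl].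
 - intros t. apply G_dec; auto.
 - exists 0. intros z [i ->]. unfold opp_seq. pose proof (G_nonneg i r Hr). lra.
 - exists l; auto. Qed.

Lemma nondecay_eig r0 : (r0 < N)%nat -> (forall t, G t r0 = 1) -> is_eigenvalue N A 1 0.
Proof. intros Hr0 H1. exists hlim, (fun _ => 0). split.
 - exists r0. split; auto. left.
   assert (hlim r0 = 1).
   { apply (UL_sequence (fun t => G t r0)). apply hlim_cv; auto.
     apply (cv_ext (fun _ => 1)). intros; auto. apply cv_const. }
   lra.
 - intros r Hr. split.
   + assert (Un_cv (fun t => rsum N (fun c => A r c * G t c)) (rsum N (fun c => A r c * hlim c))).
     { apply cv_rsum. intros k Hk. apply cv_scal. apply hlim_cv; auto. }
     assert (Un_cv (fun t => rsum N (fun c => A r c * G t c)) (hlim r)).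
     { apply (cv_ext (fun t => G (S t) r)). intros; reflexivity.
       apply (cv_shift (fun t => G t r)). apply hlim_cv; auto. }
     rewrite (UL_sequence _ _ _ H H0). ring.
   + rewrite (rsum_ext N _ (fun _ => 0)) by (intros; ring). rewrite rsum_zero. ring. Qed.

End Generic.

Lemma divmod_pair n a b : (b < n)%nat -> ((a * n + b) / n = a /\ (a * n + b) mod n = b)%nat.
Proof. intros Hb. split.
 - symmetry. apply (Nat.div_unique _ _ _ b); auto. lia.
 - symmetry. apply (Nat.mod_unique _ _ a); auto. lia. Qed.

Lemma idx_bounds n r : (r < n * n)%nat -> (r / n < n /\ r mod n < n /\ r = r / n * n + r mod n)%nat.
Proof. intros Hr. assert (Hn : n <> 0%nat) by (intro; subst; simpl in Hr; lia).
 pose proof (Nat.div_mod r n Hn). pose proof (Nat.mod_upper_bound r n Hn).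
 split; [|split; [auto|lia]]. nia. Qed.

Lemma prod_pos a b : 0 <= a -> 0 <= b -> 0 < a * b -> 0 < a /\ 0 < b.
Proof. intros Ha Hb H. destruct (Req_dec a 0) as [->|Ea]; [lra|]. destruct (Req_dec b 0) as [->|Eb]; [lra|]. lra. Qed.

Lemma walk_cons n P l a b i : walk n P l a b -> (i < n)%nat -> 0 < P i a -> walk n P (S l) i b.
Proof. intros [s [H0 [Hl [Hb Hp]]]] Hi Hpa.
 exists (fun t => match t with O => i | S t' => s t' end). split; auto. split; auto. split.
 - intros t Ht. destruct t; auto. apply Hb; lia.
 - intros t Ht. destruct t. rewrite H0; auto. apply Hp. lia. Qed.

Lemma walk_one n P i k : (i < n)%nat -> (k < n)%nat -> 0 < P i k -> walk n P 1 i k.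
Proof. intros Hi Hk Hp. exists (fun t => match t with O => i | S _ => k end).
 split; auto. split; auto. split.
 - intros t Ht. destruct t; auto.
 - intros t Ht. replace t with 0%nat by lia. auto. Qed.

Lemma walk_tail n P l a b : walk n P (S l) a b -> exists a', (a' < n)%nat /\ 0 < P a a' /\ walk n P l a' b.
Proof. intros [s [H0 [Hl [Hb Hp]]]]. exists (s 1%nat). split. apply Hb; lia. split.
 rewrite <- H0. apply Hp; lia.
 exists (fun t => s (S t)). split; auto. split; auto. split.
 - intros t Ht. apply Hb. lia.
 - intros t Ht. apply Hp. lia. Qed.

Section Specific.
Variable n : nat.
Variables Pp Pe : nat -> nat -> R.
Hypothesis hPp : row_stochastic n Pp.
Hypothesis hPe : row_stochastic n Pe.

Definition KE := mxmul (n * n) (kron n Pe Pp) (Emat n).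

Lemma KE_entry r c : (c < n * n)%nat ->
  KE r c = kron n Pe Pp r c * (1 - (if Nat.eqb (c mod n) (c / n) then 1 else 0)).
Proof. intros Hc. unfold KE, mxmul.
 rewrite <- (rsum_delta (n * n) c (fun k => kron n Pe Pp r k * (1 - (if Nat.eqb (k mod n) (k / n) then 1 else 0)))) by auto.
 apply rsum_ext. intros k Hk. unfold Emat. destruct (Nat.eqb_spec k c); [subst; auto|ring]. Qed.

Lemma KE_pair i j a b : (i < n)%nat -> (j < n)%nat -> (a < n)%nat -> (b < n)%nat ->
  KE (j * n + i) (a * n + b) = Pp i b * Pe j a * (if Nat.eqb b a then 0 else 1).
Proof. intros Hi Hj Ha Hb. rewrite KE_entry by nia. unfold kron.
 destruct (divmod_pair n j i Hi) as [E1 E2]. destruct (divmod_pair n a b Hb) as [E3 E4].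
 rewrite E1, E2, E3, E4. destruct (Nat.eqb b a); ring. Qed.

Lemma KE_nonneg r c : (r < n * n)%nat -> (c < n * n)%nat -> 0 <= KE r c.
Proof. intros Hr Hc. destruct (idx_bounds n r Hr) as [R1 [R2 R3]].
 destruct (idx_bounds n c Hc) as [C1 [C2 C3]].
 rewrite R3, C3, KE_pair by auto. destruct hPp as [P0 _]. destruct hPe as [E0 _].
 apply Rmult_le_pos. apply Rmult_le_pos; auto. destruct (Nat.eqb _ _); lra. Qed.

Lemma pair_Av v i j : (i < n)%nat -> (j < n)%nat ->
  Av (n * n) KE v (j * n + i) =
  rsum n (fun k => rsum n (fun l => Pp i k * Pe j l * (if Nat.eqb k l then 0 else v (l * n + k)%nat))).
Proof. intros Hi Hj. unfold Av. rewrite rsum_mul. rewrite rsum_swap.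
 apply rsum_ext. intros k Hk. apply rsum_ext. intros l Hl. rewrite KE_pair by auto.
 destruct (Nat.eqb k l); ring. Qed.

Lemma prod_sum i j : (i < n)%nat -> (j < n)%nat -> rsum n (fun k => rsum n (fun l => Pp i k * Pe j l)) = 1.
Proof. intros Hi Hj. destruct hPp as [_ P1]. destruct hPe as [_ E1].
 rewrite (rsum_ext n _ (fun k => Pp i k * rsum n (fun l => Pe j l))).
 - rewrite E1 by auto. rewrite rsum_scalr, P1 by auto. ring.
 - intros k _. rewrite rsum_scal. auto. Qed.

Lemma KE_row r : (r < n * n)%nat -> rsum (n * n) (fun c => KE r c) <= 1.
Proof. intros Hr. destruct (idx_bounds n r Hr) as [R1 [R2 R3]].
 transitivity (Av (n * n) KE (fun _ => 1) r). unfold Av; right; apply rsum_ext; intros; ring.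
 rewrite R3, pair_Av by auto.
 apply Rle_trans with (rsum n (fun k => rsum n (fun l => Pp (r mod n)%nat k * Pe (r / n)%nat l))).
 2:{ right. apply prod_sum; auto. }
 destruct hPp as [P0 _]. destruct hPe as [E0 _].
 apply rsum_le. intros k Hk. apply rsum_le. intros l Hl.
 assert (0 <= Pp (r mod n) k * Pe (r / n) l) by (apply Rmult_le_pos; auto).
 destruct (Nat.eqb k l); cbv beta; nra. Qed.

Definition GG := G (n * n) KE.

Lemma GG_bounds t i j : (i < n)%nat -> (j < n)%nat -> 0 <= GG t (j * n + i) <= 1.
Proof. intros. split. apply G_nonneg. apply KE_nonneg. nia.
 apply G_le1. apply KE_nonneg. apply KE_row. nia. Qed.

Lemma bridge t i j : (i < n)%nat -> (j < n)%nat ->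
  meet_prob n Pp Pe (S t) i j = GG t (j * n + i) - GG (S t) (j * n + i).
Proof. revert i j. induction t; intros i j Hi Hj.
 - unfold GG, G. simpl Vit. rewrite pair_Av by auto.
   match goal with |- _ = 1 - ?X => replace (1 - X) with (rsum n (fun k => rsum n (fun l => Pp i k * Pe j l)) - X) by (rewrite prod_sum; auto) end.
   simpl meet_prob. rewrite <- rsum_minus. apply rsum_ext. intros k Hk.
   rewrite <- rsum_minus. apply rsum_ext. intros l Hl. destruct (Nat.eqb k l); simpl; ring.
 - unfold GG, G. simpl Vit. rewrite !pair_Av by auto.
   change (meet_prob n Pp Pe (S (S t)) i j) with
     (rsum n (fun k => rsum n (fun l => Pp i k * Pe j l *
        (if Nat.eqb k l then (if Nat.eqb (S t) O then 1 else 0) else meet_prob n Pp Pe (S t) k l)))).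
   rewrite <- rsum_minus. apply rsum_ext. intros k Hk.
   rewrite <- rsum_minus. apply rsum_ext. intros l Hl. rewrite (IHt k l Hk Hl).
   unfold GG, G. simpl Vit. destruct (Nat.eqb k l); simpl; ring. Qed.

Lemma telescope T i j : (i < n)%nat -> (j < n)%nat ->
  rsum (S T) (fun t => meet_prob n Pp Pe t i j) = 1 - GG T (j * n + i).
Proof. intros Hi Hj. induction T.
 - simpl. unfold GG, G. simpl. lra.
 - change (rsum (S (S T)) (fun t => meet_prob n Pp Pe t i j)) with
     (rsum (S T) (fun t => meet_prob n Pp Pe t i j) + meet_prob n Pp Pe (S T) i j).
   rewrite IHT, bridge by auto. ring. Qed.

Lemma telescope_w T i j : (i < n)%nat -> (j < n)%nat ->
  rsum (S T) (fun t => INR t * meet_prob n Pp Pe t i j) = rsum T (fun t => GG t (j * n + i)) - INR T * GG T (j * n + i).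
Proof. intros Hi Hj. induction T.
 - simpl. lra.
 - change (rsum (S (S T)) (fun t => INR t * meet_prob n Pp Pe t i j)) with
     (rsum (S T) (fun t => INR t * meet_prob n Pp Pe t i j) + INR (S T) * meet_prob n Pp Pe (S T) i j).
   rewrite IHT, bridge by auto. simpl rsum. rewrite S_INR. ring. Qed.

Lemma mp_walk t i j : (i < n)%nat -> (j < n)%nat -> meet_prob n Pp Pe t i j <> 0 ->
  exists k, (k < n)%nat /\ (1 <= t)%nat /\ walk n Pp t i k /\ walk n Pe t j k.
Proof. revert i j. induction t; intros i j Hi Hj H; [simpl in H; lra|].
 simpl in H. destruct (rsum_nonzero _ _ H) as [k [Hk Hk']].
 destruct (rsum_nonzero _ _ Hk') as [l [Hl Hl']].
 destruct hPp as [P0 _]. destruct hPe as [E0 _].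
 assert (Hpk : 0 < Pp i k).
 { destruct (P0 i k Hi Hk) as [|E]; auto. rewrite <- E in Hl'. exfalso. apply Hl'. ring. }
 assert (Hel : 0 < Pe j l).
 { destruct (E0 j l Hj Hl) as [|E]; auto. rewrite <- E in Hl'. exfalso. apply Hl'. ring. }
 destruct (Nat.eqb_spec k l) as [<-|Hne].
 - destruct (Nat.eqb_spec t 0) as [->|Ht]; [|exfalso; apply Hl'; ring].
   exists k. split; auto. split; auto. split; apply walk_one; auto.
 - assert (meet_prob n Pp Pe t k l <> 0) by (intro E; apply Hl'; rewrite E; ring).
   destruct (IHt k l Hk Hl H0) as [m [Hm [Ht [W1 W2]]]].
   exists m. split; auto. split; [lia|]. split; eapply walk_cons; eauto. Qed.

Lemma walk_G l i j k : (i < n)%nat -> (j < n)%nat -> (1 <= l)%nat ->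
  walk n Pp l i k -> walk n Pe l j k -> GG l (j * n + i) < 1.
Proof. revert i j. induction l; intros i j Hi Hj Hl W1 W2; [lia|].
 destruct (walk_tail _ _ _ _ _ W1) as [k1 [Hk1 [Pk1 W1']]].
 destruct (walk_tail _ _ _ _ _ W2) as [l1 [Hl1 [Pl1 W2']]].
 unfold GG, G. simpl Vit. rewrite pair_Av by auto.
 apply Rlt_le_trans with (rsum n (fun k => rsum n (fun l => Pp i k * Pe j l))).
 2:{ right. apply prod_sum; auto. }
 destruct hPp as [P0 _]. destruct hPe as [E0 _].
 assert (Hz : forall k' l', (k' < n)%nat -> (l' < n)%nat ->
   0 <= (if Nat.eqb k' l' then 0 else Vit (n * n) KE l (fun _ => 1) (l' * n + k')) <= 1).
 { intros k' l' Hk' Hl'. destruct (Nat.eqb k' l'); [lra|]. apply (GG_bounds l k' l'); auto. }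
 apply (rsum_strict _ _ _ k1); auto.
 - intros k' Hk'. apply rsum_le. intros l' Hl'. specialize (Hz k' l' Hk' Hl').
   assert (0 <= Pp i k' * Pe j l') by (apply Rmult_le_pos; auto). nra.
 - apply (rsum_strict _ _ _ l1); auto.
   + intros l' Hl'. specialize (Hz k1 l' Hk1 Hl').
     assert (0 <= Pp i k1 * Pe j l') by (apply Rmult_le_pos; auto). nra.
   + assert (0 < Pp i k1 * Pe j l1) by (apply Rmult_lt_0_compat; auto).
     destruct (Nat.eqb_spec k1 l1) as [->|Hne]; [nra|].
     destruct l as [|l'].
     * destruct W1' as [s1 [A1 [B1 _]]]. destruct W2' as [s2 [A2 [B2 _]]]. congruence.
     * assert (GG (S l') (l1 * n + k1) < 1) by (apply IHl; auto; lia).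
       unfold GG, G in H0. nra. Qed.

End Specific.

Lemma walk23 n Pp Pe l i j k : (i < n)%nat -> (j < n)%nat ->
  walk n Pp l i k -> walk n Pe l j k -> walk (n * n) (kron n Pe Pp) l (j * n + i) (k * n + k).
Proof. intros Hi Hj [s1 [A1 [B1 [C1 D1]]]] [s2 [A2 [B2 [C2 D2]]]].
 exists (fun t => s2 t * n + s1 t)%nat. split; [rewrite A1, A2; auto|]. split; [rewrite B1, B2; auto|].
 split.
 - intros t Ht. specialize (C1 t Ht). specialize (C2 t Ht). nia.
 - intros t Ht. unfold kron.
   assert (s1 t < n)%nat by (apply C1; lia). assert (s1 (S t) < n)%nat by (apply C1; lia).
   destruct (divmod_pair n (s2 t) (s1 t)) as [E1 E2]; auto.
   destruct (divmod_pair n (s2 (S t)) (s1 (S t))) as [E3 E4]; auto.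
   rewrite E1, E2, E3, E4. apply Rmult_lt_0_compat; auto. Qed.

Lemma walk32 n Pp Pe l i j k : (i < n)%nat -> (j < n)%nat -> (k < n)%nat ->
  row_stochastic n Pp -> row_stochastic n Pe ->
  walk (n * n) (kron n Pe Pp) l (j * n + i) (k * n + k) -> walk n Pp l i k /\ walk n Pe l j k.
Proof. intros Hi Hj Hk [P0 _] [E0 _] [s [A1 [B1 [C1 D1]]]].
 destruct (divmod_pair n j i Hi) as [E1 E2]. destruct (divmod_pair n k k Hk) as [E3 E4].
 assert (Hb : forall t, (t <= l)%nat -> (s t / n < n /\ s t mod n < n)%nat).
 { intros t Ht. destruct (idx_bounds n (s t)) as [X [Y _]]; auto. }
 assert (Hp : forall t, (t < l)%nat -> 0 < Pe (s t / n)%nat (s (S t) / n)%nat /\ 0 < Pp (s t mod n)%nat (s (S t) mod n)%nat).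
 { intros t Ht. destruct (Hb t ltac:(lia)) as [X1 X2]. destruct (Hb (S t) ltac:(lia)) as [Y1 Y2].
   apply prod_pos; auto. apply (D1 t Ht). }
 split.
 - exists (fun t => s t mod n)%nat. rewrite A1, B1. split; auto. split; auto. split.
   + intros t Ht; apply Hb; auto.
   + intros t Ht; apply Hp; auto.
 - exists (fun t => s t / n)%nat. rewrite A1, B1. split; auto. split; auto. split.
   + intros t Ht; apply Hb; auto.
   + intros t Ht; apply Hp; auto. Qed.

Lemma formula n Pp Pe (hPp : row_stochastic n Pp) (hPe : row_stochastic n Pe) L q :
  0 <= q < 1 -> (forall r, (r < n * n)%nat -> G (n * n) (KE n Pp Pe) L r <= q) ->
  forall i j, (i < n)%nat -> (j < n)%nat ->
  meeting_time_is n Pp Pe i j (rsum (n * n) (fun c => Binv (n * n) (KE n Pp Pe) (j * n + i) c)).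
Proof. intros Hq HL i j Hi Hj.
 assert (hA0 := KE_nonneg n Pp Pe hPp hPe). assert (hA1 := KE_row n Pp Pe hPp hPe).
 assert (Hr : (j * n + i < n * n)%nat) by nia.
 split.
 - unfold infinite_sum. apply (cv_ext (fun T => 1 - GG n Pp Pe T (j * n + i))).
   + intros T. rewrite sum_f_R0_rsum, telescope; auto.
   + assert (Hc : Un_cv (fun T => 1 - GG n Pp Pe T (j * n + i)) (1 - 0)).
     { apply CV_minus. apply cv_const. apply (G_cv0 _ _ hA0 hA1 L q Hq HL); auto. }
     rewrite Rminus_0_r in Hc. exact Hc.
 - pose proof (Binv_rowsum _ _ hA0 hA1 L q Hq HL (j * n + i) Hr) as HS.
   unfold infinite_sum.
   apply (cv_ext (fun T => rsum T (fun t => GG n Pp Pe t (j * n + i)) - INR T * GG n Pp Pe T (j * n + i))).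
   + intros T. rewrite sum_f_R0_rsum, telescope_w; auto.
   + assert (Hc := CV_minus _ _ _ _ HS (TG_cv0 _ _ hA0 hA1 _ _ Hr HS)).
     rewrite Rminus_0_r in Hc. exact Hc. Qed.

Theorem theorem1 (n : nat) (Pp Pe : nat -> nat -> R)
  (hPp : row_stochastic n Pp) (hPe : row_stochastic n Pe) :
  let K := kron n Pe Pp in
  let KE := mxmul (n * n) K (Emat n) in
  let C1 := forall i j, (i < n)%nat -> (j < n)%nat ->
              meeting_time_finite n Pp Pe i j in
  let C2 := forall i j, (i < n)%nat -> (j < n)%nat ->
              exists k l, (k < n)%nat /\ (1 <= l)%nat /\
                walk n Pp l i k /\ walk n Pe l j k in
  let C3 := forall i j, (i < n)%nat -> (j < n)%nat ->
              exists k l, (k < n)%nat /\ (1 <= l)%nat /\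
                walk (n * n) K l (j * n + i)%nat (k * n + k)%nat in
  let C4 := spectral_radius_lt_1 (n * n) KE in
  ((C1 <-> C2) /\ (C2 <-> C3) /\ (C3 <-> C4)) /\
  (C1 ->
     exists B, is_inverse (n * n) B (mxsub idmx KE) /\
       forall i j, (i < n)%nat -> (j < n)%nat ->
         meeting_time_is n Pp Pe i j
           (rsum (n * n) (fun c => B (j * n + i)%nat c))).
Proof.
 intros K KE0 C1 C2 C3 C4.
 assert (hA0 := KE_nonneg n Pp Pe hPp hPe). assert (hA1 := KE_row n Pp Pe hPp hPe).
 assert (HD : C2 -> exists L q, 0 <= q < 1 /\ forall r, (r < n * n)%nat -> G (n * n) (KE n Pp Pe) L r <= q).
 { intros H2. apply (decay_uniform _ _ hA0 hA1). intros r Hr.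
   destruct (idx_bounds n r Hr) as [R1 [R2 R3]].
   destruct (H2 (r mod n) (r / n) R2 R1)%nat as [k [l [Hk [Hl [W1 W2]]]]].
   exists l. rewrite R3. apply (walk_G n Pp Pe hPp hPe l _ _ k); auto. }
 assert (H21 : C2 -> C1).
 { intros H2 i j Hi Hj. destruct (HD H2) as [L [q [Hq HL]]].
   destruct (formula n Pp Pe hPp hPe L q Hq HL i j Hi Hj) as [F1 F2].
   split; auto. eexists; eauto. }
 assert (H12 : C1 -> C2).
 { intros H1 i j Hi Hj. destruct (H1 i j Hi Hj) as [Hs _].
   destruct (classic (exists t, meet_prob n Pp Pe t i j <> 0)) as [[t Ht]|Hn].
   - destruct (mp_walk n Pp Pe hPp hPe t i j Hi Hj Ht) as [k [Hk [Ht1 [W1 W2]]]].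
     exists k, t. auto.
   - exfalso. assert (Hz : infinite_sum (fun t => meet_prob n Pp Pe t i j) 0).
     { unfold infinite_sum. apply (cv_ext (fun _ => 0)). 2: apply cv_const.
       intros T. rewrite sum_f_R0_rsum. rewrite <- (rsum_zero (S T)). apply rsum_ext.
       intros t _. apply NNPP. intro E. apply Hn. exists t. auto. }
     pose proof (UL_sequence _ _ _ Hs Hz). lra. }
 assert (H23 : C2 -> C3).
 { intros H2 i j Hi Hj. destruct (H2 i j Hi Hj) as [k [l [Hk [Hl [W1 W2]]]]].
   exists k, l. split; auto. split; auto. apply walk23; auto. }
 assert (H32 : C3 -> C2).
 { intros H3 i j Hi Hj. destruct (H3 i j Hi Hj) as [k [l [Hk [Hl W]]]].
   exists k, l. split; auto. split; auto. apply walk32; auto. }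
 assert (H24 : C2 -> C4).
 { intros H2. destruct (HD H2) as [L [q [Hq HL]]]. exact (spectral_lt1 _ _ hA0 hA1 L q Hq HL). }
 assert (H42 : C4 -> C2).
 { intros H4. destruct (classic (exists i j, (i < n)%nat /\ (j < n)%nat /\
        ~ (exists k l, (k < n)%nat /\ (1 <= l)%nat /\ walk n Pp l i k /\ walk n Pe l j k))) as [[i [j [Hi [Hj Hn]]]]|Hn].
   - exfalso.
     assert (Hz : forall t, meet_prob n Pp Pe t i j = 0).
     { intros t. apply NNPP. intro E. apply Hn.
       destruct (mp_walk n Pp Pe hPp hPe t i j Hi Hj E) as [k [Hk [Ht1 [W1 W2]]]]. exists k, t. auto. }
     assert (Hr : (j * n + i < n * n)%nat) by nia.
     assert (H1 : forall t, G (n * n) (KE n Pp Pe) t (j * n + i) = 1).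
     { intros t. pose proof (telescope n Pp Pe hPp hPe t i j Hi Hj) as T.
       rewrite (rsum_ext _ _ (fun _ => 0)) in T by (intros; apply Hz). rewrite rsum_zero in T.
       unfold GG in T. lra. }
     pose proof (nondecay_eig _ _ hA0 hA1 _ Hr H1) as He.
     specialize (H4 1 0 He). replace (1 * 1 + 0 * 0) with 1 in H4 by ring. rewrite sqrt_1 in H4. lra.
   - intros i j Hi Hj. apply NNPP. intro E. apply Hn. exists i, j. auto. }
 split.
 - split; [tauto|]. split; tauto.
 - intros H1. destruct (HD (H12 H1)) as [L [q [Hq HL]]].
   exists (Binv (n * n) (KE n Pp Pe)). split.
   + exact (Binv_inverse _ _ hA0 hA1 L q Hq HL).
   + intros i j Hi Hj. apply (formula n Pp Pe hPp hPe L q Hq HL); auto.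
Qed.
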